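(* Consider fair division instances with $n=2$ agents, $m$ divisible goods, additive valuations and generalized assignment constraints (sizes and budgets publicly known; agents report valuations). Let $\mathcal{M}$ be the mechanism that splits each good $g$ into two identical halves $g^{(1)},g^{(2)}$, forms $S_1=\{g^{(1)}:g\in[m]\}$ and $S_2=\{g^{(2)}:g\in[m]\}$, and for each agent $i\in\{1,2\}$ sets $x_i$ to be a maximum-valued (with respect to $i$'s reported valuation) feasible-for-$i$ fractional subset of $S_i$, the rest going to charity. Then $\mathcal{M}$ is truthful and always outputs an FEF allocation.
   Context: An allocation is $x=(x_1,x_2)$ with $x_i\in[0,1]^m$ and $x_{1,g}+x_{2,g}\le1$; the charity receives $x_{\mathrm{charity},g}=1-x_{1,g}-x_{2,g}$. Additive valuations: $v_i(y)=\sum_g y_g v_{i,g}$. Generalized assignment constraints: agent $i$ has sizes $s_i(g)\ge0$ and budget $B_i$; bundle $y$ is feasible for $i$ iff $\sum_g s_i(g)y_g\le B_i$. A feasible allocation is FEF if for all agents $i,j$, every $y\le x_j$ (componentwise) feasible for $i$ has $v_i(x_i)\ge v_i(y)$, and every $y\le x_{\mathrm{charity}}$ feasible for $i$ has $v_i(x_i)\ge v_i(y)$. A mechanism maps reported additive valuation profiles to feasible allocations; it is truthful if for every agent $i$ with true valuation $v_i$ and every profile of reports of the others, agent $i$'s true value for her bundle when reporting $v_i$ is at least her true value for her bundle under any misreport $v_i'$. *)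

(* Defs.v *)
From HB Require Import structures.
From mathcomp Require Import all_boot all_order all_algebra.
Set Implicit Arguments. Unset Strict Implicit. Unset Printing Implicit Defensive.
Import Order.TTheory GRing.Theory Num.Theory.
Local Open Scope ring_scope.

Section Defs.
Variables (R : realFieldType) (m : nat).

Definition agent := 'I_2.
Definition good := 'I_m.

Definition bundle (y : good -> R) : Prop := forall g, 0 <= y g <= 1.

Definition value (v : good -> R) (y : good -> R) : R := \sum_(g : good) y g * v g.

Definition nonneg_val (v : good -> R) : Prop := forall g, 0 <= v g.
Definition nonneg_profile (vs : agent -> good -> R) : Prop :=
  forall i, nonneg_val (vs i).

Definition fits (s : good -> R) (B : R) (y : good -> R) : Prop :=
  \sum_(g : good) s g * y g <= B.

Definition le_bundle (y z : good -> R) : Prop := forall g, y g <= z g.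

Definition charity (x : agent -> good -> R) (g : good) : R :=
  1 - x ord0 g - x (lift ord0 ord0) g.

Definition feasible_alloc (s : agent -> good -> R) (B : agent -> R)
  (x : agent -> good -> R) : Prop :=
  (forall i, bundle (x i)) /\
  (forall g, x ord0 g + x (lift ord0 ord0) g <= 1) /\
  (forall i, fits (s i) (B i) (x i)).

Definition FEF (s : agent -> good -> R) (B : agent -> R)
  (vs : agent -> good -> R) (x : agent -> good -> R) : Prop :=
  forall i : agent,
    (forall j : agent, forall y, bundle y -> le_bundle y (x j) ->
        fits (s i) (B i) y -> value (vs i) y <= value (vs i) (x i)) /\
    (forall y, bundle y -> le_bundle y (charity x) ->
        fits (s i) (B i) y -> value (vs i) y <= value (vs i) (x i)).

Definition mechanism := (agent -> good -> R) -> agent -> good -> R.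

Definition update (vs : agent -> good -> R) (i : agent) (w : good -> R) :
  agent -> good -> R := fun k => if k == i then w else vs k.

Definition truthful (M : mechanism) : Prop :=
  forall (vs : agent -> good -> R) (i : agent) (w : good -> R),
    nonneg_profile vs -> nonneg_val w ->
    value (vs i) (M (update vs i w) i) <= value (vs i) (M vs i).

(* fractional subsets of S_i: each good contributes its half g^(i), so the
   amount taken is in [0, 1/2] *)
Definition half_bundle (y : good -> R) : Prop := forall g, 0 <= y g <= 2^-1.

(* M is the halving mechanism: for every (nonnegative) reported profile, agent
   i receives a maximum-valued (w.r.t. i's report) feasible-for-i fractional
   subset of S_i; ties broken arbitrarily. *)
Definition halving_mechanism (s : agent -> good -> R) (B : agent -> R)
  (M : mechanism) : Prop :=
  forall vs, nonneg_profile vs -> forall i : agent,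
    half_bundle (M vs i) /\ fits (s i) (B i) (M vs i) /\
    (forall y, half_bundle y -> fits (s i) (B i) y ->
       value (vs i) y <= value (vs i) (M vs i)).

End Defs.

(* Main.v *)
Require Import Defs.
From HB Require Import structures.
From mathcomp Require Import all_boot all_order all_algebra.
Import Order.TTheory GRing.Theory Num.Theory.
Local Open Scope ring_scope.

Lemma sum_mid (R : realFieldType) (m : nat) (a b : 'I_m -> R) :
  \sum_(g : 'I_m) (a g + b g) / 2 = (\sum_g a g + \sum_g b g) / 2.
Proof. by rewrite -big_split /= mulr_suml. Qed.

Lemma value_mid (R : realFieldType) (m : nat) (v x y : good m -> R) :
  value v (fun g => (x g + y g) / 2) = (value v x + value v y) / 2.
Proof.
rewrite /value -sum_mid; apply: eq_bigr => g _.
by rewrite mulrAC mulrDl.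
Qed.

Lemma fits_mid (R : realFieldType) (m : nat) (s : good m -> R) B (x y : good m -> R) :
  fits s B x -> fits s B y -> fits s B (fun g => (x g + y g) / 2).
Proof.
rewrite /fits => hx hy.
have -> : \sum_(g : good m) s g * ((x g + y g) / 2) =
   (\sum_g s g * x g + \sum_g s g * y g) / 2.
  rewrite -sum_mid; apply: eq_bigr => g _; by rewrite mulrA mulrDr.
rewrite ler_pdivrMr ?ltr0n //.
by rewrite mulrDr mulr1 lerD.
Qed.

Lemma agent_cases (i : agent) : i = ord0 \/ i = lift ord0 ord0.
Proof.
case: i => [[|[|k]] Hk]; [left|right|]; try (by apply/val_inj).
by [].
Qed.

Theorem theorem5 (R : realFieldType) (m : nat)
  (s : agent -> good m -> R) (B : agent -> R)
  (hs : forall i g, 0 <= s i g) (hB : forall i, 0 <= B i)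
  (M : mechanism R m) (hM : halving_mechanism s B M) :
  truthful M /\
  (forall vs : agent -> good m -> R, nonneg_profile vs ->
     feasible_alloc s B (M vs) /\ FEF s B vs (M vs)).
Proof.
have half_le1 : (2^-1 : R) <= 1 by rewrite invf_le1 ?ler1n ?ltr0n.
split.
  move=> vs i w hvs hw.
  have hup : nonneg_profile (update vs i w).
    move=> k; rewrite /update; case: (k == i) => //.
  have [h1 [h2 _]] := hM _ hup i.
  have [_ [_ h3]] := hM _ hvs i.
  exact: h3.
move=> vs hvs.
have hx := hM vs hvs.
have nn : forall k g, 0 <= M vs k g by move=> k g; case: (hx k) => /(_ g) /andP [] .
have le12 : forall k g, M vs k g <= 2^-1 by move=> k g; case: (hx k) => /(_ g) /andP [].
split.
  split; [|split].
  - move=> k g; apply/andP; split; first exact: nn.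
    exact: le_trans (le12 k g) half_le1.
  - move=> g; have := le12 ord0 g; have := le12 (lift ord0 ord0) g.
    by move=> a b; apply: le_trans (lerD b a) _; rewrite [leRHS](splitr 1) mul1r.
  - by move=> k; case: (hx k) => _ [].
move=> i; split.
  move=> j y hy hle hf.
  case: (hx i) => _ [_ hmax]; apply: hmax => // g.
  have /andP [y0 _] := hy g.
  by rewrite y0 /=; apply: le_trans (hle g) (le12 j g).
move=> y hy hle hf.
case: (hx i) => _ [hfi hmax].
have := hmax (fun g => (M vs i g + y g) / 2).
rewrite value_mid.
have Hh : half_bundle (fun g => (M vs i g + y g) / 2).
  move=> g; have /andP [y0 _] := hy g.
  apply/andP; split; first by rewrite divr_ge0 ?addr_ge0 ?nn.
  rewrite ler_pdivrMr ?ltr0n // mulVf ?pnatr_eq0 //.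
  have := hle g; rewrite /charity => hc.
  have hxi : M vs i g <= M vs ord0 g + M vs (lift ord0 ord0) g.
    case: (agent_cases i) => ->.
    - by rewrite lerDl nn.
    - by rewrite lerDr nn.
  rewrite -lerBrDl; apply: le_trans hc _.
  idtac.
  by rewrite -addrA lerD2l -opprD lerN2.
move=> /(_ Hh (@fits_mid _ _ _ _ _ _ hfi hf)).
rewrite ler_pdivrMr ?ltr0n // mulrDr mulr1 lerD2l //.
Qed.
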